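(* Let $p\ge 1$ and $c>0$ be constants, let $a>0$, and let $x_a:[0,\infty)\to\mathbb{R}$ be the unique solution of $$x'''+c\,x^p\, x''=0,\qquad x(0)=0=x'(0),\quad x''(0)=a$$ (which is defined on all of $[0,\infty)$). Then $\lim_{t\to\infty} x_a''(t)=0$, and the limit $h(a):=\lim_{t\to\infty} x_a'(t)$ exists, is finite and is positive. *)

(* Defs.v *)
From HB Require Import structures.
From mathcomp Require Export all_boot all_order all_algebra.
From mathcomp Require Export all_classical all_reals all_analysis.
Export Order.TTheory GRing.Theory Num.Theory.
Export numFieldNormedType.Exports.

(* Main.v *)
Require Import Defs.
From mathcomp Require Import ring lra.
Local Open Scope classical_set_scope.
Local Open Scope ring_scope.

Lemma mvt_ge (R : realType) (f df : R -> R) (a b m : R) : a <= b ->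
  (forall t, a < t -> t < b -> is_derive t 1 f (df t)) ->
  (forall t, a < t -> t < b -> m <= df t) ->
  {within `[a,b], continuous f} -> m * (b - a) <= f b - f a.
Proof.
rewrite le_eqVlt => /predU1P[-> |ab] H1 H2 C; first by rewrite !subrr mulr0.
have [c] := MVT (df:=df) ab (fun t tab => H1 t (proj1 (andP (tab : (a < t < b)))) (proj2 (andP (tab : (a < t < b))))) C.
rewrite in_itv /= => /andP[ac cb] ->.
by rewrite ler_pM2r ?H2 // subr_gt0.
Qed.

Lemma mvt_le (R : realType) (f df : R -> R) (a b m : R) : a <= b ->
  (forall t, a < t -> t < b -> is_derive t 1 f (df t)) ->
  (forall t, a < t -> t < b -> df t <= m) ->
  {within `[a,b], continuous f} -> f b - f a <= m * (b - a).
Proof.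
rewrite le_eqVlt => /predU1P[-> |ab] H1 H2 C; first by rewrite !subrr mulr0.
have [c] := MVT (df:=df) ab (fun t tab => H1 t (proj1 (andP (tab : (a < t < b)))) (proj2 (andP (tab : (a < t < b))))) C.
rewrite in_itv /= => /andP[ac cb] ->.
by rewrite ler_pM2r ?H2 // subr_gt0.
Qed.

Lemma mvt_gt (R : realType) (f df : R -> R) (a b : R) : a < b ->
  (forall t, a < t -> t < b -> is_derive t 1 f (df t)) ->
  (forall t, a < t -> t < b -> 0 < df t) ->
  {within `[a,b], continuous f} -> f a < f b.
Proof.
move=> ab H1 H2 C.
have [c] := MVT (df:=df) ab (fun t tab => H1 t (proj1 (andP (tab : (a < t < b)))) (proj2 (andP (tab : (a < t < b))))) C.
rewrite in_itv /= => /andP[ac cb] E.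
by rewrite -subr_gt0 E mulr_gt0 ?H2 // subr_gt0.
Qed.

Lemma wD (R : realType) (A : set R) (f g : R -> R) :
  {within A, continuous f} -> {within A, continuous g} -> {within A, continuous (f + g)}.
Proof. move=> Hf Hg t. apply: continuousD; [exact: Hf | exact: Hg]. Qed.
Lemma wM (R : realType) (A : set R) (f g : R -> R) :
  {within A, continuous f} -> {within A, continuous g} -> {within A, continuous (f * g)}.
Proof. move=> Hf Hg t. apply: continuousM; [exact: Hf | exact: Hg]. Qed.
Lemma wsub (R : realType) (f : R -> R) (a b : R) : 0 <= a ->
  {within `[0,+oo[, continuous f} -> {within `[a,b], continuous f}.
Proof.
move=> a0; apply: continuous_subspaceW => t /=; rewrite !in_itv /= => /andP[ha _].
by rewrite (le_trans a0 ha).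
Qed.
Lemma der_cont (R : realType) (f : R -> R) (t d : R) : is_derive t 1 f d -> {for t, continuous f}.
Proof. by case=> H _; apply/differentiable_continuous/derivable1_diffP. Qed.
Lemma dlin (R : realType) (k t : R) : is_derive t 1 ( *%R k) k.
Proof.
have H := is_deriveZ k (is_derive_id t (1:R)).
have -> : ( *%R k) = (k \*: id) by apply/funext.
by rewrite -[X in is_derive _ _ _ X](mulr1 k).
Qed.
Lemma dexp (R : realType) (k t : R) : is_derive t 1 (expR \o ( *%R k)) (expR (k * t) * k).
Proof. have H1 := dlin _ k t. have H2 := (@is_derive_expR R (k * t)). have := is_derive1_comp H2 H1. done. Qed.

Theorem lemma2 (R : realType) (p c a : R) (x x1 x2 : R -> R) :
  1 <= p -> 0 < c -> 0 < a ->
  x 0 = 0 -> x1 0 = 0 -> x2 0 = a ->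
  {within `[0, +oo[, continuous x} ->
  {within `[0, +oo[, continuous x1} ->
  {within `[0, +oo[, continuous x2} ->
  (forall t : R, 0 < t -> is_derive t 1 x (x1 t)) ->
  (forall t : R, 0 < t -> is_derive t 1 x1 (x2 t)) ->
  (forall t : R, 0 < t -> is_derive t 1 x2 (- (c * (x t `^ p) * x2 t))) ->
  (x2 t @[t --> +oo] --> 0) /\
  (exists h : R, (x1 t @[t --> +oo] --> h) /\ 0 < h).
Proof.
move=> p1 c0 a0 x00 x10 x20 Cx Cx1 Cx2 Dx Dx1 Dx2.
have p0 : 0 <= p by apply: le_trans p1.
have x2pos : forall t, 0 <= t -> 0 < x2 t.
  move=> s; rewrite le_eqVlt => /predU1P[<-|s0]; first by rewrite x20.
  have [cm cmI cmM] := EVT_max (ltW s0) (wsub _ _ 0 s (lexx 0) Cx).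
  set K := c * Num.max 1 (x cm `^ p).
  have Kb : forall t, 0 <= t <= s -> c * x t `^ p <= K.
    move=> t /andP[t0 ts]; rewrite /K ler_pM2l //.
    have [xt0|xt0] := ltP (x t) 0.
      by rewrite lt0_powR1 // le_max lexx.
    have hx : x t <= x cm by apply: cmM; rewrite in_itv /= t0 ts.
    rewrite le_max; apply/orP; right; apply: ge0_ler_powR => //; rewrite nnegrE //.
    exact: le_trans hx.
  pose h := (x2 * x2) * (expR \o ( *%R (2 * K))).
  have hmono : forall u, 0 < u <= s -> a * a <= h u.
    move=> u /andP[u0 us].
    have H := mvt_ge _ h (fun t => x2 t * x2 t * (expR (2*K*t) * (2*K)) + expR (2*K*t) * (x2 t * (- (c * x t `^ p * x2 t)) + x2 t * (- (c * x t `^ p * x2 t)))) 0 u 0 (ltW u0).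
    have C2 := wsub _ x2 0 u (lexx 0) Cx2.
    have Ce : {within `[0,u], continuous (expR \o *%R (2*K))}.
      by apply: continuous_subspaceT => t; exact: der_cont (dexp _ (2*K) t).
    have D : forall t, 0 < t -> t < u -> is_derive t 1 h (x2 t * x2 t * (expR (2*K*t) * (2*K)) + expR (2*K*t) * (x2 t * (- (c * x t `^ p * x2 t)) + x2 t * (- (c * x t `^ p * x2 t)))).
      move=> t t0 tu; exact: (is_deriveM (is_deriveM (Dx2 t t0) (Dx2 t t0)) (dexp _ (2*K) t)).
    have Ng : forall t, 0 < t -> t < u -> 0 <= (x2 t * x2 t * (expR (2*K*t) * (2*K)) + expR (2*K*t) * (x2 t * (- (c * x t `^ p * x2 t)) + x2 t * (- (c * x t `^ p * x2 t)))).
      move=> t t0 tu.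
      have tb : c * x t `^ p <= K by apply: Kb; rewrite (ltW t0) (le_trans (ltW tu) us).
      have -> : forall d e f : R, d * d * (e * (2 * K)) + e * (d * - (f * d) + d * - (f * d)) = e * (d * d) * (2 * K - 2 * f) by move=> *; ring.
      apply: mulr_ge0; first by apply: mulr_ge0; [exact: expR_ge0 | rewrite -expr2 sqr_ge0].
      by rewrite subr_ge0 ler_pM2l.
    have := H D Ng (wM _ _ _ _ (wM _ _ _ _ C2 C2) Ce).
    have -> : h 0 = x2 0 * x2 0 * expR (2*K*0) by [].
    by rewrite mul0r subr_ge0 x20 mulr0 expR0 mulr1.
  rewrite ltNge; apply/negP => xs.
  have mm : Num.min (x2 0) (x2 s) <= 0 <= Num.max (x2 0) (x2 s).
    by rewrite ge_min le_max xs orbT x20 (ltW a0).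
  have [c1 c1I c1E] := @IVT R x2 0 s 0 (ltW s0) (wsub _ x2 0 s (lexx 0) Cx2) mm.
  move: c1I; rewrite in_itv /= => /andP[]; rewrite le_eqVlt => /predU1P[c1z|c1p] c1s.
    by move: c1E; rewrite -c1z x20 => a00; move: a0; rewrite a00 ltxx.
  have := hmono c1; rewrite c1p c1s => /(_ isT).
  have -> : h c1 = x2 c1 * x2 c1 * expR (2*K*c1) by [].
  rewrite c1E !mul0r => aa; move: (mulr_gt0 a0 a0); rewrite ltNge aa.
  done.
have x1pos : forall t, 0 < t -> 0 < x1 t.
  move=> t t0; rewrite -x10; apply: (mvt_gt _ x1 x2 0 t t0).
  - by move=> u u0 _; exact: Dx1.
  - by move=> u u0 _; apply: x2pos; exact: ltW.
  - exact: wsub _ x1 0 t (lexx 0) Cx1.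
have xpos : forall t, 0 < t -> 0 < x t.
  move=> t t0; rewrite -x00; apply: (mvt_gt _ x x1 0 t t0).
  - by move=> u u0 _; exact: Dx.
  - by move=> u u0 _; exact: x1pos.
  - exact: wsub _ x 0 t (lexx 0) Cx.
have d0 : 0 < x 1 := xpos 1 ltr01.
have xge : forall t, 1 <= t -> x 1 <= x t.
  move=> t t1; rewrite -subr_ge0; have := mvt_ge _ x x1 1 t 0 t1; rewrite mul0r; apply.
  - by move=> u u1 _; apply: Dx; exact: lt_trans ltr01 u1.
  - by move=> u u1 _; apply: ltW; apply: x1pos; exact: lt_trans ltr01 u1.
  - exact: wsub _ x 1 t ler01 Cx.
set k := c * x 1 `^ p.
have k0 : 0 < k by apply: mulr_gt0 => //; exact: powR_gt0.
have kle : forall t, 1 <= t -> k <= c * x t `^ p.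
  move=> t t1; rewrite /k ler_pM2l //; apply: ge0_ler_powR => //; rewrite ?nnegrE ?(ltW d0) ?xge //.
  exact: le_trans (ltW d0) (xge t t1).
have x2dec : forall s t, 0 < s -> s <= t -> x2 t <= x2 s.
  move=> s t s0 st; rewrite -subr_le0.
  have := mvt_le _ x2 (fun u => - (c * x u `^ p * x2 u)) s t 0 st; rewrite mul0r; apply.
  - by move=> u su _; apply: Dx2; exact: lt_trans s0 su.
  - move=> u su _; rewrite oppr_le0; apply: mulr_ge0; first by apply: mulr_ge0; [exact: ltW|exact: powR_ge0].
    by apply: ltW; apply: x2pos; apply: ltW; exact: lt_trans s0 su.
  - exact: wsub _ x2 s t (ltW s0) Cx2.
have x1inc : forall s t, 0 <= s -> s <= t -> x1 s <= x1 t.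
  move=> s t s0 st; rewrite -subr_ge0; have := mvt_ge _ x1 x2 s t 0 st; rewrite mul0r; apply.
  - by move=> u su _; apply: Dx1; exact: le_lt_trans s0 su.
  - by move=> u su _; apply: ltW; apply: x2pos; apply: ltW; exact: le_lt_trans s0 su.
  - exact: wsub _ x1 s t s0 Cx1.
set Bd := x1 1 + k^-1 * x2 1.
have Bb : forall t, 1 <= t -> x1 t <= Bd.
  move=> t t1.
  pose phi := x1 + (cst k^-1 * x2).
  have := mvt_le _ phi (fun u => x2 u + (k^-1 * - (c * x u `^ p * x2 u) + x2 u * 0)) 1 t 0 t1.
  rewrite mul0r subr_le0.
  have -> : phi t = x1 t + k^-1 * x2 t by [].
  have -> : phi 1 = Bd by [].
  move=> H.
  have H2 : x1 t <= x1 t + k^-1 * x2 t.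
    rewrite lerDl; apply: mulr_ge0; first by rewrite invr_ge0 ltW.
    by apply: ltW; apply: x2pos; exact: le_trans ler01 t1.
  apply: (le_trans H2); apply: H.
  - move=> u u1 _; have u0 : 0 < u := lt_trans ltr01 u1.
    exact: (is_deriveD (Dx1 u u0) (is_deriveM (@is_derive_cst _ _ _ k^-1 u 1) (Dx2 u u0))).
  - move=> u u1 _.
    have u0 : 0 < u := lt_trans ltr01 u1.
    rewrite mulr0 addr0 mulrN subr_le0 -(ler_pM2l k0) mulrA mulfV ?gt_eqF // mul1r.
    by rewrite ler_pM2r; [exact: kle (ltW u1) | exact: x2pos _ (ltW u0)].
  - apply: wD; first exact: wsub _ x1 1 t ler01 Cx1.
    apply: wM; last exact: wsub _ x2 1 t ler01 Cx2.
    by apply: continuous_subspaceT => u; exact: cst_continuous.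
have xb : forall t, 0 <= t -> x1 t <= Bd.
  move=> t t0; have [t1|t1] := leP 1 t; first exact: Bb.
  apply: le_trans (x1inc t 1 t0 (ltW t1)) _.
  rewrite /Bd lerDl; apply: mulr_ge0; first by rewrite invr_ge0 ltW.
  by apply: ltW; apply: x2pos; exact: ler01.
split.
  apply/cvgrPdist_lt => e e0.
  have [t0 [t01 t0e]] : exists t0, 1 <= t0 /\ x2 t0 < e.
    apply: contrapT => Hn.
    have ge : forall t, 1 <= t -> e <= x2 t.
      move=> t t1; rewrite leNgt; apply/negP => lt; apply: Hn; exists t; split => //.
    have Bd0 : 0 < Bd by apply: lt_le_trans (x1pos 1 ltr01) (xb 1 ler01).
    set T := 2 + Bd / e.
    have T1 : 1 <= T by rewrite /T; have := divr_gt0 Bd0 e0; lra.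
    have := mvt_ge _ x1 x2 1 T e T1.
    have eT : e * (T - 1) = e + Bd by rewrite /T; field; exact: lt0r_neq0.
    rewrite eT => H.
    have := H (fun u u1 _ => Dx1 u (lt_trans ltr01 u1)) (fun u u1 _ => ge u (ltW u1)) (wsub _ x1 1 T ler01 Cx1).
    have := xb T (le_trans ler01 T1); have := x1pos 1 ltr01; lra.
  exists t0; split; first exact: num_real.
  move=> t tt; rewrite sub0r normrN ger0_norm; last by apply: ltW; apply: x2pos; apply: ltW; exact: le_lt_trans (le_trans ler01 t01) tt.
  apply: le_lt_trans (x2dec t0 t (lt_le_trans ltr01 t01) (ltW tt)) t0e.
pose E := [set y | exists t, 0 <= t /\ x1 t = y].
have hasE : has_sup E.
  split; first by exists (x1 0); exists 0.
  by exists Bd => y [t [t0 <-]]; exact: xb.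
have ub : forall t, 0 <= t -> x1 t <= sup E.
  by move=> t t0; apply: sup_upper_bound => //; exists t.
exists (sup E); split; last exact: lt_le_trans (x1pos 1 ltr01) (ub 1 ler01).
apply/cvgrPdist_lt => e e0.
have [y [t0 [t00 <-]] yl] := sup_adherent e0 hasE.
exists t0; split; first exact: num_real.
move=> t tt; rewrite ger0_norm ?subr_ge0 ?ub //; last by apply: le_trans t00 (ltW tt).
have := x1inc t0 t t00 (ltW tt); lra.
Qed.
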